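(* Let $q$ be a prime power, let $k\geq 2$ and $r>4$ be integers, let $n=rk$, and let $e=\lceil r/4\rceil-1$. Let $\gamma\in\mathbb{F}_{q^n}$ be a root of an irreducible polynomial of degree $r$ over $\mathbb{F}_{q^k}$. For every $\delta\in\mathbb{F}_{q^k}$ and every integer $l$ with $2\leq l\leq e+1$, the $\mathbb{F}_q$-subspace $$U_{\delta,l}=\{a+u\gamma+(u^q+\delta u)\gamma^{l}\mid a\in\mathbb{F}_q,\ u\in\mathbb{F}_{q^k}\}$$ of $\mathbb{F}_{q^n}$ is a Sidon space.
   Context: An $\mathbb{F}_q$-subspace $U$ of $\mathbb{F}_{q^n}$ is a Sidon space if for all nonzero $a,b,c,d\in U$, $ab=cd$ implies $\{a\mathbb{F}_q,b\mathbb{F}_q\}=\{c\mathbb{F}_q,d\mathbb{F}_q\}$. *)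

(* Defs.v *)
From mathcomp Require Import all_boot all_order all_algebra all_field.
Set Implicit Arguments. Unset Strict Implicit. Unset Printing Implicit Defensive.
Import GRing.Theory.
Local Open Scope ring_scope.

(* Subfield F_{q^m} of a finite field L (of characteristic p, q a power of p):
   the elements fixed by x |-> x^(q^m). *)
Definition subF (L : finFieldType) (Q : nat) : {set L} := [set x : L | x ^+ Q == x].

Definition prime_power (q : nat) : Prop := exists p m : nat, prime p /\ (0 < m)%N /\ q = (p ^ m)%N.

Definition irreducible_over (L : fieldType) (S : {pred L}) (p : {poly L}) : Prop :=
  p \is a polyOver S /\ (1 < size p)%N /\
  forall a b : {poly L}, a \is a polyOver S -> b \is a polyOver S -> p = a * b ->
    size a = 1%N \/ size b = 1%N.

Definition is_subspace (L : finFieldType) (F U : {set L}) : Prop :=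
  0 \in U /\ (forall x y, x \in U -> y \in U -> x + y \in U) /\
  (forall t x, t \in F -> x \in U -> t * x \in U).

Definition line (L : finFieldType) (F : {set L}) (a : L) : {set L} :=
  [set x : L | [exists t in F, x == a * t]].

Definition sidon_space (L : finFieldType) (F U : {set L}) : Prop :=
  is_subspace F U /\
  forall a b c d : L, a \in U -> b \in U -> c \in U -> d \in U ->
    a != 0 -> b != 0 -> c != 0 -> d != 0 -> a * b = c * d ->
    [set line F a; line F b] = [set line F c; line F d].

Definition e_of (r : nat) : nat := ((r + 3) %/ 4).-1.

Definition U_dl (L : finFieldType) (q k : nat) (g delta : L) (l : nat) : {set L} :=
  [set x : L | [exists a in subF L q, exists u in subF L (q ^ k),
     x == a + u * g + (u ^+ q + delta * u) * g ^+ l]].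

(* Main.v *)
Require Import Defs.
From mathcomp Require Import all_boot all_order all_algebra all_field.
From mathcomp Require Import ring zify.
Set Implicit Arguments. Unset Strict Implicit. Unset Printing Implicit Defensive.
Import GRing.Theory.
Local Open Scope ring_scope.

Section Over.
Variables (L : fieldType) (S : {pred L}).
Hypotheses (S0 : 0 \in S) (SD : {in S &, forall x y, x + y \in S})
  (SN : {in S, forall x, - x \in S}) (SM : {in S &, forall x y, x * y \in S})
  (SV : {in S, forall x, x^-1 \in S}).

Lemma pOP (p : {poly L}) : reflect (forall i, p`_i \in S) (p \in polyOver S).
Proof.
apply: (iffP (all_nthP 0)) => [Sp i | Sp i _]; last exact: Sp.
by have [/Sp // | /(nth_default 0)->] := ltnP i (size p).
Qed.
Lemma pOPi (p : {poly L}) : p \in polyOver S -> forall i, p`_i \in S.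
Proof. by move/pOP. Qed.

Lemma pOD (p q : {poly L}) : p \is a polyOver S -> q \is a polyOver S -> p + q \is a polyOver S.
Proof. move=> hp hq; apply/pOP => i; rewrite coefD; by apply: SD; apply: pOPi. Qed.
Lemma pON (p : {poly L}) : p \is a polyOver S -> - p \is a polyOver S.
Proof. move=> hp; apply/pOP => i; rewrite coefN; by apply: SN; apply: pOPi. Qed.
Lemma pOM (p q : {poly L}) : p \is a polyOver S -> q \is a polyOver S -> p * q \is a polyOver S.
Proof.
move=> hp hq; apply/pOP => i; rewrite coefM.
apply: (big_ind (fun x => x \in S)).
- exact: S0.
- by move=> x y hx hy; apply: SD.
- move=> j _; apply: SM; [exact: (pOPi hp) | exact: (pOPi hq)].
Qed.
Lemma pOC c : c \in S -> c%:P \is a polyOver S.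
Proof. move=> hc; apply/pOP => i; rewrite coefC; by case: eqP. Qed.

Hypothesis S1 : 1 \in S.
Lemma pOXn m : 'X^m \is a polyOver S.
Proof. apply/pOP => i; rewrite coefXn; by case: eqP. Qed.

Lemma lcS (p : {poly L}) : p \is a polyOver S -> lead_coef p \in S.
Proof. move=> hp; rewrite lead_coefE; exact: (pOPi hp). Qed.

Lemma divS (Q : {poly L}) : Q \is a polyOver S -> Q != 0 -> forall n (P : {poly L}), (size P <= n)%N ->
  P \is a polyOver S -> exists D R, [/\ D \is a polyOver S, R \is a polyOver S,
     P = Q * D + R & (size R < size Q)%N].
Proof.
move=> hQ Q0; elim=> [|n IH] P hs hP.
  exists 0, 0; rewrite size_poly0 size_poly_gt0 Q0 mulr0 addr0 polyOver0; split=> //.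
  by apply/eqP; rewrite -size_poly_eq0 -leqn0.
have [lt|ge] := ltnP (size P) (size Q).
  by exists 0, P; rewrite mulr0 add0r polyOver0.
have sQ : (0 < size Q)%N by rewrite size_poly_gt0.
set m := (size P - size Q)%N.
set c := lead_coef P / lead_coef Q.
have lQ : lead_coef Q != 0 by rewrite lead_coef_eq0.
have hc : c \in S by apply: SM; [exact: lcS | apply: SV; exact: lcS].
set G := c%:P * ('X^m * Q).
have hG : G \is a polyOver S by apply: pOM; [exact: pOC| apply: pOM => //; exact: pOXn].
have hP' : P - G \is a polyOver S by apply: pOD => //; exact: pON.
have sP' : (size (P - G)%R <= n)%N.
  have : (size (P - G)%R <= (size P).-1)%N.
    apply/leq_sizeP => j hj; rewrite coefB /G coefCM coefXnM.
    have -> : (j < m)%N = false by apply/negbTE; rewrite -leqNgt /m; lia.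
    have [ej|nj] := eqVneq j (size P).-1.
      have -> : (j - m = (size Q).-1)%N by rewrite ej /m; lia.
      by rewrite -lead_coefE /c divfK // ej -lead_coefE subrr.
    have nj' : j <> (size P).-1 by apply/eqP.
    have hjP : (size P <= j)%N.
      by move: hj nj'; case: (size P) => //= s hj nj'; lia.
    rewrite nth_default //.
    rewrite nth_default ?mulr0 ?subrr //; rewrite /m; move: ge hjP; move: (size P) (size Q) => a b; lia.
  move=> h; apply: leq_trans h _; lia.
have [D [R [hD hR eP hRs]]] := IH _ sP' hP'.
exists (D + c%:P * 'X^m), R; split=> //.
  by apply: pOD => //; apply: pOM; [exact: pOC | exact: pOXn].
by rewrite -[P](subrK G) eP /G; ring.
Qed.

Lemma indep (P : {poly L}) (g : L) r : irreducible_over S P -> size P = r.+1 ->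
  root P g -> forall R : {poly L}, R \is a polyOver S -> (size R <= r)%N -> root R g -> R = 0.
Proof.
move=> [hP [_ hirr]] sP rP.
suff H : forall n (R : {poly L}), (size R <= n)%N -> R \is a polyOver S ->
   (size R <= r)%N -> root R g -> R = 0 by move=> R; exact: H.
elim=> [|n IH] R hs hR hr rR.
  by apply/eqP; rewrite -size_poly_eq0 -leqn0.
have [->//|R0] := eqVneq R 0.
have [D [T [hD hT eP hTs]]] := divS hR R0 (leqnn (size P)) hP.
have rT : root T g.
  have -> : T = P - R * D by rewrite eP; ring.
  by rewrite rootE hornerD hornerN hornerM (rootP rP) (rootP rR) mul0r subrr.
have T0 : T = 0.
  apply: (IH T) => //.
    move: hs hTs; move: (size T) (size R) => a b; lia.
  move: hr hTs; move: (size T) (size R) => a b; lia.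
move: eP; rewrite T0 addr0 => eP.
have [h1|h1] := hirr R D hR hD eP.
  have eR := size1_polyC (eq_leq h1).
  move: rR; rewrite eR rootC => /eqP e0.
  by move: R0; rewrite eR e0 eqxx.
have D0 : D != 0 by rewrite -size_poly_eq0 h1.
move: sP; rewrite eP size_mul // h1 addn1 /= => e.
move: hr; rewrite e; lia.
Qed.
End Over.
Section Core.
Variables (L : finFieldType) (q : nat) (delta g : L) (l : nat).
Hypotheses (q0 : (0 < q)%N) (frD : forall x y : L, (x + y) ^+ q = x ^+ q + y ^+ q).

Let F := subF L q.
Definition ff (u : L) := u ^+ q + delta * u.
Definition elt (a u : L) := a + u * g + ff u * g ^+ l.

Lemma inFq x : (x \in F) = (x ^+ q == x).
Proof. by rewrite /F /subF inE. Qed.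

Lemma fr0 : 0 ^+ q = 0 :> L. Proof. by rewrite expr0n; move: q0; case: (q). Qed.
Lemma frN (x : L) : (- x) ^+ q = - x ^+ q.
Proof. by apply/eqP; rewrite -subr_eq0 opprK -frD addNr fr0. Qed.

Lemma FM x y : x \in F -> y \in F -> x * y \in F.
Proof. by rewrite !inFq exprMn => /eqP-> /eqP->. Qed.
Lemma FV x : x \in F -> x^-1 \in F.
Proof. by rewrite !inFq exprVn => /eqP->. Qed.
Lemma FD x y : x \in F -> y \in F -> x + y \in F.
Proof. by rewrite !inFq frD => /eqP-> /eqP->. Qed.
Lemma FN x : x \in F -> - x \in F.
Proof. by rewrite !inFq frN => /eqP->. Qed.
Lemma FB x y : x \in F -> y \in F -> x - y \in F.
Proof. by move=> hx hy; apply: FD => //; exact: FN. Qed.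

Lemma ff0 : ff 0 = 0. Proof. by rewrite /ff fr0 mulr0 addr0. Qed.
Lemma ffZ lam u : lam \in F -> ff (lam * u) = lam * ff u.
Proof. by rewrite inFq => /eqP hl; rewrite /ff exprMn hl; ring. Qed.
Lemma eltZ lam a u : lam \in F -> elt (lam * a) (lam * u) = lam * elt a u.
Proof. by move=> hl; rewrite /elt ffZ //; ring. Qed.
Lemma elt0 a : elt a 0 = a. Proof. by rewrite /elt ff0; ring. Qed.

Lemma line_scale lam x : lam \in F -> lam != 0 -> line F (lam * x) = line F x.
Proof.
move=> hl l0; apply/setP => y; rewrite !inE; apply/existsP/existsP.
  move=> [t /andP[ht /eqP ->]]; exists (lam * t); rewrite FM //=.
  by apply/eqP; ring.
move=> [t /andP[ht /eqP ->]]; exists (lam^-1 * t); rewrite FM ?FV //=.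
by apply/eqP; field.
Qed.

Definition Concl x y z t := [set line F x; line F y] = [set line F z; line F t].
Lemma concl_same x y z t : line F x = line F z -> line F y = line F t -> Concl x y z t.
Proof. by rewrite /Concl => -> ->. Qed.
Lemma concl_swap x y z t : line F x = line F t -> line F y = line F z -> Concl x y z t.
Proof. by rewrite /Concl setUC => -> ->. Qed.

Lemma caseA a b c d v s : a \in F -> b \in F -> c \in F -> d \in F ->
  elt a 0 != 0 -> elt c 0 != 0 -> a * b = c * d -> a * v = c * s ->
  line F (elt a 0) = line F (elt c 0) /\ line F (elt b v) = line F (elt d s).
Proof.
rewrite !elt0 => ha hb hc hd a0 c0 E0 E1.
set lam := a / c.
have hl : lam \in F by apply: FM => //; exact: FV.
have l0 : lam != 0 by rewrite mulf_neq0 // invr_eq0.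
have ea : a = lam * c by rewrite /lam divfK.
have es : s = lam * v by apply: (mulfI c0); rewrite -E1 /lam; field.
have ed : d = lam * b by apply: (mulfI c0); rewrite -E0 /lam; field.
split; first by rewrite ea line_scale.
by rewrite es ed eltZ // line_scale.
Qed.


Lemma caseC a b c d u v w s : a \in F -> b \in F -> c \in F -> d \in F ->
  u != 0 -> v != 0 -> w != 0 -> ff u * w = ff w * u ->
  a * b = c * d -> a * v + b * u = c * s + d * w -> u * v = w * s ->
  Concl (elt a u) (elt b v) (elt c w) (elt d s).
Proof.
move=> ha hb hc hd u0 v0 w0 H E0 E1 E2.
set lam := w / u.
have e1 : u ^+ q * w = w ^+ q * u.
  have : u ^+ q * w - w ^+ q * u = ff u * w - ff w * u by rewrite /ff; ring.
  by rewrite H subrr => /eqP; rewrite subr_eq0 => /eqP.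
have hl : lam \in F.
  rewrite inFq /lam exprMn exprVn eqr_div ?expf_neq0 //.
  by rewrite -e1 mulrC.
have l0 : lam != 0 by rewrite mulf_neq0 // invr_eq0.
have ew : w = lam * u by rewrite /lam divfK.
set mu := lam^-1.
have hm : mu \in F by exact: FV.
have m0 : mu != 0 by rewrite invr_eq0.
have ev : v = lam * s by apply: (mulfI u0); rewrite E2 ew; ring.
have es : s = mu * v by rewrite ev /mu mulKf.
have E1' : (a - c * mu) * v + (b - d * lam) * u = 0.
  have -> : (a - c * mu) * v + (b - d * lam) * u = a * v + b * u - (c * (mu * v) + d * (lam * u)) by ring.
  by rewrite E1 -es -ew subrr.
set A := a - c * mu.
have hA : A \in F by apply: FB => //; exact: FM.
have [A0|A0] := eqVneq A 0.
  move: E1'; rewrite -/A A0 mul0r add0r => /eqP; rewrite mulf_eq0 (negbTE u0) orbF subr_eq0 => /eqP eb.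
  have ea : a = c * mu by apply/eqP; rewrite -subr_eq0; apply/eqP; exact: A0.
  apply: concl_same.
    have -> : elt c w = lam * elt a u.
      by rewrite -eltZ // ew ea /mu; congr elt; field.
    by rewrite line_scale.
  have -> : elt d s = mu * elt b v.
    by rewrite -eltZ // es eb /mu; congr elt; field.
  by rewrite line_scale.
set kap := (d * lam - b) / A.
have hk : kap \in F by apply: FM; [apply: FB => //; exact: FM | exact: FV].
have ev' : v = kap * u.
  apply: (mulfI A0); rewrite /kap.
  have -> : A * ((d * lam - b) / A * u) = (d * lam - b) * u by field.
  apply/eqP; rewrite -subr_eq0; apply/eqP; rewrite -[X in _ = X]E1' /A; ring.
have k0 : kap != 0 by apply: contraNneq v0 => k0; rewrite ev' k0 mul0r.
have eb : b = d * lam - A * kap by rewrite /kap; field.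
have key : A * (d * lam - kap * a) = a * b - c * d.
  rewrite eb /A /mu; field.
  by [].
have edl : d * lam = kap * a.
  apply/eqP; rewrite -subr_eq0; apply/eqP; apply: (mulfI A0).
  by rewrite key E0 subrr mulr0.
have eb' : b = kap * (c * mu) by rewrite eb edl /A; ring.
apply: concl_swap.
  have -> : elt d s = (mu * kap) * elt a u.
    rewrite -eltZ; last by exact: FM.
    rewrite es ev' /mu; congr elt; last by ring.
    by apply: (mulIf l0); rewrite edl; field.
  by rewrite line_scale //; [exact: FM | exact: mulf_neq0].
have -> : elt b v = kap * elt (c * mu) u by rewrite -eltZ // eb' ev'.
have -> : elt c w = lam * elt (c * mu) u.
  by rewrite -eltZ // ew /mu; congr elt; field.
by rewrite !line_scale.
Qed.

Lemma core a b c d u v w s : a \in F -> b \in F -> c \in F -> d \in F ->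
  elt a u != 0 -> elt b v != 0 -> elt c w != 0 -> elt d s != 0 ->
  a * b = c * d -> a * v + b * u = c * s + d * w -> u * v = w * s ->
  u * ff v + v * ff u = w * ff s + s * ff w -> ff u * ff v = ff w * ff s ->
  Concl (elt a u) (elt b v) (elt c w) (elt d s).
Proof.
move=> ha hb hc hd x0 y0 z0 t0 E0 E1 E2 E3 E4.
have [u0|u0] := eqVneq u 0.
  subst u; have : w * s == 0 by rewrite -E2 mul0r.
  rewrite mulf_eq0 => /orP[/eqP w0|/eqP s0].
    subst w; have e : a * v = c * s by move: E1; rewrite !mulr0 !addr0.
    have [h1 h2] := caseA ha hb hc hd x0 z0 E0 e.
    by apply: concl_same.
  subst s; have e : a * v = d * w by move: E1; rewrite !mulr0 addr0 add0r.
  have e' : a * b = d * c by rewrite E0 mulrC.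
  have [h1 h2] := caseA ha hb hd hc x0 t0 e' e.
  by apply: concl_swap.
have [v0|v0] := eqVneq v 0.
  subst v; have : w * s == 0 by rewrite -E2 mulr0.
  rewrite mulf_eq0 => /orP[/eqP w0|/eqP s0].
    subst w; have e : b * u = c * s by move: E1; rewrite !mulr0 !addr0 add0r.
    have e' : b * a = c * d by rewrite mulrC.
    have [h1 h2] := caseA hb ha hc hd y0 z0 e' e.
    by apply: concl_swap.
  subst s; have e : b * u = d * w by move: E1; rewrite !mulr0 !add0r.
  have e' : b * a = d * c by rewrite mulrC E0 mulrC.
  have [h1 h2] := caseA hb ha hd hc y0 t0 e' e.
  by apply: concl_same.
have w0 : w != 0.
  by apply: contraNneq (mulf_neq0 u0 v0) => w0; rewrite E2 w0 mul0r.
have s0 : s != 0.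
  by apply: contraNneq (mulf_neq0 u0 v0) => s0; rewrite E2 s0 mulr0.
have key : (ff u * w - ff w * u) * (ff u * s - ff s * u) = 0.
  have -> : (ff u * w - ff w * u) * (ff u * s - ff s * u) =
     ff u ^+ 2 * (w * s) - ff u * u * (w * ff s + s * ff w) + u ^+ 2 * (ff w * ff s) by ring.
  by rewrite -E2 -E3 -E4; ring.
move/eqP: key; rewrite mulf_eq0 => /orP[/eqP k|/eqP k].
  by apply: caseC => //; apply/eqP; rewrite -subr_eq0 k.
have h : Concl (elt a u) (elt b v) (elt d s) (elt c w).
  apply: caseC => //.
  - by apply/eqP; rewrite -subr_eq0 k.
  - by rewrite E0 mulrC.
  - by rewrite E1 addrC.
  - by rewrite E2 mulrC.
by rewrite /Concl h; apply/setP => X; rewrite !inE orbC.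
Qed.
End Core.

Section Poly.
Variables (L : finFieldType) (q : nat) (delta g : L) (l : nat).
Hypothesis hl : (2 <= l)%N.
Local Notation ff := (ff q delta).

Definition Ep (a u b v : L) : {poly L} :=
  (a * b)%:P * 'X^0 + (a * v + b * u)%:P * 'X^1 + (u * v)%:P * 'X^2 +
  (a * ff v + b * ff u)%:P * 'X^l + (u * ff v + v * ff u)%:P * 'X^(l.+1) +
  (ff u * ff v)%:P * 'X^(l + l).

Lemma Ep_eval a u b v : (Ep a u b v).[g] = elt q delta g l a u * elt q delta g l b v.
Proof.
rewrite /Ep /elt !hornerD !hornerCM !hornerXn (exprS g l) (exprD g l l) expr0 expr1 expr2; ring.
Qed.

Lemma Ep_coef a u b v i : (Ep a u b v)`_i =
  a * b * (i == 0)%:R + (a * v + b * u) * (i == 1)%:R + (u * v) * (i == 2)%:R +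
  (a * ff v + b * ff u) * (i == l)%:R + (u * ff v + v * ff u) * (i == l.+1)%:R +
  (ff u * ff v) * (i == l + l)%:R.
Proof. by rewrite /Ep !coefD !coefCM !coefXn. Qed.

Ltac crush := rewrite Ep_coef; repeat (case: eqP => ?); try lia; rewrite /= ?mul1r ?mul0r ?mulr0 ?mulr1 ?addr0 ?add0r; try done; try ring.

Lemma Ep0 a u b v : (Ep a u b v)`_0 = a * b.
Proof. crush. Qed.
Lemma Ep1 a u b v : (Ep a u b v)`_1 = a * v + b * u.
Proof. crush. Qed.
Lemma Ep2 a u b v : (Ep a u b v)`_2 = u * v + (l == 2)%:R * (a * ff v + b * ff u).
Proof. crush. Qed.
Lemma Ep3 a u b v : (Ep a u b v)`_(l.+1) = u * ff v + v * ff u.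
Proof. crush. Qed.
Lemma Ep4 a u b v : (Ep a u b v)`_(l + l) = ff u * ff v.
Proof. crush. Qed.
Lemma Ep5 a u b v i : (l + l < i)%N -> (Ep a u b v)`_i = 0.
Proof. move=> h; crush. Qed.
End Poly.

Lemma pow_fix (L : fieldType) (x : L) (q j : nat) : x ^+ q = x -> x ^+ (q ^ j) = x.
Proof.
move=> h; elim: j => [|j IH]; first by rewrite expn0 expr1.
by rewrite expnSr exprM IH h.
Qed.

Lemma bound r l : (4 < r)%N -> (2 <= l)%N -> (l <= (e_of r).+1)%N -> (l + l < r)%N.
Proof. rewrite /e_of => h1 h2 h3; lia. Qed.

Theorem lemma3p10 (q k r n : nat) (L : finFieldType)
  (hq : prime_power q) (hk : (2 <= k)%N) (hr : (4 < r)%N) (hn : n = (r * k)%N)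
  (hL : #|L| = (q ^ n)%N)
  (gamma : L)
  (hgamma : exists P : {poly L},
      irreducible_over (mem (subF L (q ^ k))) P /\ size P = r.+1 /\ root P gamma) :
  forall (delta : L) (l : nat), delta \in subF L (q ^ k) ->
    (2 <= l)%N -> (l <= (e_of r).+1)%N ->
    sidon_space (subF L q) (U_dl q k gamma delta l).
Proof.
move=> delta l hdelta hl2 hle.
have [p [m [pp [m0 eq]]]] := hq.
have pch : p \in [pchar L].
  by apply: (card_finPcharP (n := (m * n)%N)) => //; rewrite hL eq -expnM.
have frob : forall e (x y : L), (x + y) ^+ (p ^ e) = x ^+ (p ^ e) + y ^+ (p ^ e).
  move=> e x y; apply: exprDn_pchar.
  by rewrite (eq_pnat _ (pcharf_eq pch)) pnatX pnat_id.
have frq : forall x y : L, (x + y) ^+ q = x ^+ q + y ^+ q by rewrite eq; exact: frob.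
have frQ : forall x y : L, (x + y) ^+ (q ^ k) = x ^+ (q ^ k) + y ^+ (q ^ k).
  by rewrite eq -expnM; exact: frob.
have q0 : (0 < q)%N by rewrite eq expn_gt0 prime_gt0.
have Q0 : (0 < q ^ k)%N by rewrite expn_gt0 q0.
have FqS : forall x, x \in subF L q -> x \in subF L (q ^ k).
  by move=> x; rewrite !inE => /eqP hx; apply/eqP; apply: pow_fix.
have S0 : (0 : L) \in subF L (q ^ k) by rewrite inE fr0.
have S1 : (1 : L) \in subF L (q ^ k) by rewrite inE expr1n.
have Fq0 : (0 : L) \in subF L q by rewrite inE fr0.
have memU : forall x, x \in U_dl q k gamma delta l -> exists a u,
    [/\ a \in subF L q, u \in subF L (q ^ k) & x = elt q delta gamma l a u].
  move=> x; rewrite inE => /existsP [a /andP [ha /existsP [u /andP [hu /eqP ->]]]].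
  by exists a, u.
have Umem : forall a u, a \in subF L q -> u \in subF L (q ^ k) ->
    elt q delta gamma l a u \in U_dl q k gamma delta l.
  move=> a u ha hu; rewrite inE; apply/existsP; exists a; rewrite ha /=.
  by apply/existsP; exists u; rewrite hu /=.
have ffS : forall u, u \in subF L (q ^ k) -> ff q delta u \in subF L (q ^ k).
  move=> u hu; rewrite /ff; apply: (FD frQ); last by apply: FM.
  rewrite inE -exprM mulnC exprM; move: hu; rewrite inE => /eqP ->; by [].
have ffD : forall u v : L, ff q delta (u + v) = ff q delta u + ff q delta v.
  by move=> u v; rewrite /ff frq; ring.
split.
  split; first by rewrite -(elt0 delta gamma l q0 0) Umem.
  split.
    move=> x y /memU [a [u [ha hu ->]]] /memU [b [v [hb hv ->]]].
    have -> : elt q delta gamma l a u + elt q delta gamma l b v =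
              elt q delta gamma l (a + b) (u + v) by rewrite /elt ffD; ring.
    by apply: Umem; [exact: (FD frq) | exact: (FD frQ)].
  move=> t x ht /memU [a [u [ha hu ->]]].
  rewrite -eltZ //; apply: Umem; first exact: FM.
  by apply: FM => //; exact: FqS.
move=> x y z t hx hy hz ht.
move: hx hy hz ht => /memU [a [u [ha hu ->]]] /memU [b [v [hb hv ->]]].
move=> /memU [c [w [hc hw ->]]] /memU [d [s [hd hs ->]]] x0 y0 z0 t0 exy.
have [P [hirr [sP rP]]] := hgamma.
pose SS : {pred L} := mem (subF L (q ^ k)).
have SD : {in SS &, forall x y : L, x + y \in SS} by move=> x' y'; exact: (FD frQ).
have SN : {in SS, forall x : L, - x \in SS} by move=> x'; exact: (FN Q0 frQ).
have SM : {in SS &, forall x y : L, x * y \in SS} by move=> x' y'; exact: FM.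
have SV : {in SS, forall x : L, x^-1 \in SS} by move=> x'; exact: FV.
have S0' : (0 : L) \in SS by [].
have S1' : (1 : L) \in SS by [].
have inS : forall x', x' \in subF L (q ^ k) -> x' \in SS by [].
set Q := Ep q delta l a u b v - Ep q delta l c w d s.
have hQS : Q \is a polyOver SS.
  have hf : forall u', u' \in subF L (q ^ k) -> ff q delta u' \in SS by move=> u' /ffS.
  have hF : forall a', a' \in subF L q -> a' \in SS by move=> a' /FqS.
  have hE : forall a' u' b' v', a' \in subF L q -> u' \in subF L (q ^ k) ->
      b' \in subF L q -> v' \in subF L (q ^ k) -> Ep q delta l a' u' b' v' \is a polyOver SS.
    move=> a' u' b' v' ha' hu' hb' hv'; rewrite /Ep.
    have hC : forall c' i, c' \in SS -> c'%:P * 'X^i \is a polyOver SS.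
      by move=> c' i hc'; apply: (pOM S0' SD SM); [exact: (pOC S0') | exact: (pOXn S0' S1')].
    apply: (pOD S0' SD); [apply: (pOD S0' SD); [apply: (pOD S0' SD); [apply: (pOD S0' SD); [apply: (pOD S0' SD)|]|]|]|];
      apply: hC.
    - by apply: SM; apply: hF.
    - by apply: SD; apply: SM; [exact: hF | exact: inS | exact: hF | exact: inS].
    - by apply: SM; exact: inS.
    - by apply: SD; apply: SM; [exact: hF | exact: hf | exact: hF | exact: hf].
    - by apply: SD; apply: SM; [exact: inS | exact: hf | exact: inS | exact: hf].
    - by apply: SM; exact: hf.
  by rewrite /Q; apply: (pOD S0' SD); last apply: (pON S0' SN); apply: hE.
have sQ : (size Q <= r)%N.
  have hlr := bound hr hl2 hle.
  apply/leq_sizeP => i hi; rewrite /Q coefB !Ep5 ?subrr //; exact: leq_trans hlr hi.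
have rQ : root Q gamma.
  by rewrite /root /Q hornerD hornerN !Ep_eval exy subrr.
have Q0' : Q = 0 := indep S0' SD SN SM SV S1' hirr sP rP hQS sQ rQ.
have ce : forall i, (Ep q delta l a u b v)`_i = (Ep q delta l c w d s)`_i.
  by move=> i; apply/eqP; rewrite -subr_eq0 -coefB -/Q Q0' coef0.
have E0 := ce 0%N; rewrite !Ep0 // in E0.
have E1 := ce 1%N; rewrite !Ep1 // in E1.
have E3 := ce l.+1; rewrite !Ep3 // in E3.
have E4 := ce (l + l)%N; rewrite !Ep4 // in E4.
have ffL : forall a' b' u' v', a' \in subF L q -> b' \in subF L q ->
    a' * ff q delta v' + b' * ff q delta u' = ff q delta (a' * v' + b' * u').
  by move=> a' b' u' v' ha' hb'; rewrite ffD !ffZ.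
have E2 := ce 2%N; rewrite !Ep2 // !ffL // E1 in E2.
move/addIr: E2 => E2.
exact: (core q0 frq ha hb hc hd x0 y0 z0 t0 E0 E1 E2 E3 E4).
Qed.
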